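(* Let $\mathcal{N}$ (from $X$, $|X|=m$, to $Y$, $|Y|=n$) and $\mathcal{M}$ (from $X'$, $|X'|=m'$, to $Y$) be classical channels whose columns $\mathbf{p}_x=\mathcal{N}(\mathbf{e}_x)$, $x\in[m]$, and $\mathbf{q}_w=\mathcal{M}(\mathbf{e}_w)$, $w\in[m']$, all have entries in non-increasing order (e.g. both channels are in standard form). The following are equivalent: (1) $\mathcal{N}\succ\mathcal{M}$; (2) $\mathrm{Conv}(\mathcal{N})\succ\mathrm{Conv}(\mathcal{M})$ as sets; (3) there is an $m\times m'$ column-stochastic matrix $S=(s_{x|w})$ with $\sum_{x\in[m]}s_{x|w}\mathbf{p}_x\succ\mathbf{q}_w$ for all $w\in[m']$; (4) for all $\mathbf{s}\in\mathrm{Prob}^{\downarrow}(n)$, $\max_{x\in[m]}\mathbf{s}\cdot\mathbf{p}_x\ge\max_{w\in[m']}\mathbf{s}\cdot\mathbf{q}_w$; (5) for all $\mathbf{t}\in\mathrm{Prob}(n)$ and all $w\in[m']$, $\max_{x\in[m]}\sum_{k\in[n]}t_k\frac{\|\mathbf{p}_x\|_{(k)}}{\|\mathbf{q}_w\|_{(k)}}\ge1$.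
   Context: A classical channel is given by a column-stochastic transition matrix; $\mathbf{e}_x$ are standard basis vectors. For $\mathbf{p}\in\mathrm{Prob}(n)$, $\|\mathbf{p}\|_{(k)}$ is the sum of its $k$ largest entries; $\mathbf{p}\succ\mathbf{q}$ means $\|\mathbf{p}\|_{(k)}\ge\|\mathbf{q}\|_{(k)}$ for all $k\in[n]$. $\mathrm{Prob}^{\downarrow}(n)$ is the set of probability vectors with non-increasing entries. $\mathrm{Conv}(\mathcal{N})$ and $\mathrm{Conv}(\mathcal{M})$ are the convex hulls of $\{\mathbf{p}_x\}$ and $\{\mathbf{q}_w\}$. For sets $\mathfrak{K}_1,\mathfrak{K}_2\subseteq\mathrm{Prob}(n)$, $\mathfrak{K}_1\succ\mathfrak{K}_2$ means every $\mathbf{q}\in\mathfrak{K}_2$ is majorized by some $\mathbf{p}\in\mathfrak{K}_1$. Classical channel majorization $\mathcal{N}\succ\mathcal{M}$: there is a random permutation superchannel $\Theta$ with $\mathcal{M}=\Theta[\mathcal{N}]$, i.e. $\Theta[\mathcal{N}]=\mathcal{D}^{YZ\to Y}\circ(\mathcal{N}\otimes\mathrm{id}^Z)\circ\mathcal{S}^{X'\to XZ}$ for a finite classical system $Z$, classical channels $\mathcal{S},\mathcal{D}$, with $\mathcal{D}(\cdot\otimes\mathbf{e}_z)$ doubly stochastic for every $z$. *)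

(* Defs.v *)
From HB Require Import structures.
From mathcomp Require Import all_boot all_order all_algebra.
From mathcomp Require Import reals.
Set Implicit Arguments. Unset Strict Implicit. Unset Printing Implicit Defensive.
Import Order.TTheory GRing.Theory Num.Theory.
Local Open Scope ring_scope.

(* A classical channel from X to Y is represented by its transition
   matrix N, with N x y = entry (y, x) = probability of output y on input x.
   Column x of the transition matrix is the vector N x = N(e_x). *)

Definition is_prob (R : realType) (T : finType) (p : T -> R) : Prop :=
  (forall i, 0 <= p i) /\ \sum_(i : T) p i = 1.

Definition is_channel (R : realType) (X Y : finType) (N : X -> Y -> R) : Prop :=
  forall x, is_prob (N x).

(* doubly stochastic square matrix A (A y y' = entry (y', y)) *)
Definition doubly_stochastic (R : realType) (Y : finType) (A : Y -> Y -> R) : Prop :=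
  is_channel A /\ (forall y', \sum_(y : Y) A y y' = 1).

Definition nonincreasing (R : realType) (n : nat) (p : 'I_n -> R) : Prop :=
  forall i j : 'I_n, (i <= j)%N -> p j <= p i.

Definition is_prob_dec (R : realType) (n : nat) (s : 'I_n -> R) : Prop :=
  is_prob s /\ nonincreasing s.

Definition kfnorm (R : realType) (n : nat) (p : 'I_n -> R) (k : nat) : R :=
  \sum_(a <- take k (sort (fun u v : R => v <= u) [seq p i | i <- enum 'I_n])) a.

Definition majorizes (R : realType) (n : nat) (p q : 'I_n -> R) : Prop :=
  forall k : nat, (1 <= k <= n)%N -> kfnorm q k <= kfnorm p k.

Definition conv_hull (R : realType) (X : finType) (n : nat) (N : X -> 'I_n -> R)
  (p : 'I_n -> R) : Prop :=
  exists a : X -> R, is_prob a /\ forall y, p y = \sum_(x : X) a x * N x y.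

Definition set_majorizes (R : realType) (n : nat) (K1 K2 : ('I_n -> R) -> Prop) : Prop :=
  forall q, K2 q -> exists p, K1 p /\ majorizes p q.

(* channel majorization N > M: M = Theta[N] for a random permutation superchannel,
   Theta[N] = D o (N (x) id_Z) o S, with D( . (x) e_z) doubly stochastic. *)
Definition channel_majorizes (R : realType) (X X' Y : finType)
  (N : X -> Y -> R) (M : X' -> Y -> R) : Prop :=
  exists (Z : finType) (S : X' -> (X * Z)%type -> R) (D : (Y * Z)%type -> Y -> R),
    [/\ is_channel S, is_channel D,
        (forall z : Z, doubly_stochastic (fun y y' => D (y, z) y')) &
        (forall (w : X') (y' : Y),
           M w y' = \sum_(xz : X * Z) S w xz * \sum_(y : Y) N xz.1 y * D (y, xz.2) y')].

Definition dotv (R : realType) (n : nat) (s p : 'I_n -> R) : R :=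
  \sum_(i < n) s i * p i.

(* Main.v *)
Require Import Defs.
From HB Require Import structures.
From mathcomp Require Import all_boot all_order all_algebra all_fingroup.
From mathcomp Require Import reals ring lra.
Import Order.TTheory GRing.Theory Num.Theory.
Local Open Scope ring_scope.
Set Implicit Arguments. Unset Strict Implicit. Unset Printing Implicit Defensive.

Section Aux.
Variable R : realType.

Definition psum n (p : 'I_n -> R) (k : nat) : R := \sum_(i < n | (i < k)%N) p i.

Definition ext n (f : 'I_n -> R) (i : nat) : R :=
  if @insub nat (fun i => (i < n)%N) 'I_n i is Some j then f j else 0.

Lemma extE n (f : 'I_n -> R) i (h : (i < n)%N) : ext f i = f (Ordinal h).
Proof.
rewrite /ext; case: insubP => [j _ hj|]; last by rewrite h.
by congr f; apply: val_inj; rewrite /= hj.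
Qed.

Lemma extV n (f : 'I_n -> R) (i : 'I_n) : ext f i = f i.
Proof. by rewrite /ext valK. Qed.

Lemma psum_ext n (f : 'I_n -> R) k : (k <= n)%N -> psum f k = \sum_(i < k) ext f i.
Proof.
move=> hk; rewrite (big_ord_widen _ _ hk) /psum; apply: eq_bigr => i _.
by rewrite extV.
Qed.

Lemma kfnormE n (p : 'I_n -> R) k : nonincreasing p -> kfnorm p k = psum p k.
Proof.
move=> Hp; rewrite /kfnorm.
have Hs : sorted (fun u v : R => v <= u) [seq p i | i <- enum 'I_n].
  rewrite sorted_map; apply: (@sub_sorted _ (relpre val leq)).
    by move=> i j /=; apply: Hp.
  by rewrite -sorted_map val_enum_ord; apply: iota_sorted.
rewrite sorted_sort //; last by move=> a b c h1 h2; apply: le_trans h2 h1.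
rewrite -map_take big_map.
transitivity (\sum_(i <- take k (enum 'I_n)) ext p (val i)).
  by apply: eq_bigr => i _; rewrite extV.
rewrite -(big_map val xpredT) map_take val_enum_ord take_iota.
have -> : iota 0 (minn k n) = index_iota 0 (minn k n) by rewrite /index_iota subn0.
rewrite big_mkord (big_ord_widen _ _ (geq_minr k n)) /psum.
apply: eq_big => i; first by rewrite leq_min ltn_ord andbT.
by rewrite extV.
Qed.

Lemma psum_mix (I : finType) n (a : I -> R) (f : I -> 'I_n -> R) k :
  psum (fun y => \sum_x a x * f x y) k = \sum_x a x * psum (f x) k.
Proof.
rewrite /psum exchange_big /=; apply: eq_bigr => x _.
by rewrite mulr_sumr.
Qed.

Lemma noninc_mix (I : finType) n (a : I -> R) (f : I -> 'I_n -> R) :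
  (forall x, 0 <= a x) -> (forall x, nonincreasing (f x)) ->
  nonincreasing (fun y => \sum_x a x * f x y).
Proof.
move=> ha hf i j hij; apply: ler_sum => x _; apply: ler_wpM2l => //.
exact: hf.
Qed.

Lemma W n (p c : 'I_n -> R) k : nonincreasing p -> (forall i, 0 <= p i) ->
  (forall i, 0 <= c i <= 1) -> \sum_i c i <= k%:R ->
  \sum_i c i * p i <= psum p k.
Proof.
move=> Hp Hp0 Hc Hs; case: (ltnP k n) => hk.
  set t := p (Ordinal hk).
  have t0 : 0 <= t := Hp0 _.
  have e : \sum_i c i * p i = \sum_i c i * (p i - t) + t * \sum_i c i.
    rewrite mulr_sumr -big_split; apply: eq_bigr => i _ /=; ring.
  have h1 : \sum_i c i * (p i - t) <= \sum_(i < n | (i < k)%N) (p i - t).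
    rewrite [X in _ <= X]big_mkcond; apply: ler_sum => i _.
    have /andP [c0 c1] := Hc i.
    case: ifP => hi.
      apply: ler_piMl => //; rewrite subr_ge0; apply: Hp; exact: ltnW.
    apply: mulr_ge0_le0 => //; rewrite subr_le0; apply: Hp.
    by rewrite /= leqNgt hi.
  have h2 : \sum_(i < n | (i < k)%N) (p i - t) = psum p k - k%:R * t.
    rewrite sumrB; congr (_ - _).
    rewrite -(big_ord_widen n (fun _ => t) (ltnW hk)) sumr_const card_ord.
    by rewrite mulr_natl.
  rewrite e; apply: le_trans (lerD h1 (ler_wpM2l t0 Hs)) _.
  by rewrite h2 mulrC subrK.
rewrite /psum; under [X in _ <= X]eq_bigl => i do
  rewrite (leq_trans (ltn_ord i) hk).
apply: ler_sum => i _; have /andP [c0 c1] := Hc i; exact: ler_piMl.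
Qed.

Lemma abel_id (s d : nat -> R) n :
  \sum_(i < n.+1) s i * d i =
  s n * \sum_(i < n.+1) d i + \sum_(i < n) (s i - s i.+1) * \sum_(j < i.+1) d j.
Proof.
elim: n => [|n IH]; first by rewrite !big_ord1 big_ord0 addr0.
rewrite big_ord_recr /= IH.
rewrite (big_ord_recr n.+1 (fun i : 'I_n.+2 => d i)) /=.
rewrite (big_ord_recr n (fun i : 'I_n.+1 => (s i - s i.+1) * \sum_(j < i.+1) d j)) /=.
ring.
Qed.

Lemma abel_nat (s d : nat -> R) n :
  (forall i, (i < n)%N -> 0 <= s i) ->
  (forall i, (i.+1 < n)%N -> s i.+1 <= s i) ->
  (forall k, (k <= n)%N -> 0 <= \sum_(i < k) d i) ->
  0 <= \sum_(i < n) s i * d i.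
Proof.
case: n => [|n] hs hd hD; first by rewrite big_ord0.
rewrite abel_id; apply: addr_ge0.
  by apply: mulr_ge0; [apply: hs|apply: hD].
apply: sumr_ge0 => i _; apply: mulr_ge0.
  by rewrite subr_ge0; apply: hd; rewrite ltnS.
by apply: hD; rewrite ltnS ltnW.
Qed.

Lemma abel_ord n (s u v : 'I_n -> R) : nonincreasing s -> (forall i, 0 <= s i) ->
  (forall k, (k <= n)%N -> psum u k <= psum v k) ->
  \sum_i s i * u i <= \sum_i s i * v i.
Proof.
move=> Hs Hs0 Huv; rewrite -subr_ge0 -sumrB.
have -> : \sum_(i < n) (s i * v i - s i * u i) =
    \sum_(i < n) ext s i * ext (fun j => v j - u j) i.
  by apply: eq_bigr => i _; rewrite !extV mulrBr.
apply: abel_nat.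
- by move=> i hi; rewrite extE.
- move=> i hi; rewrite (extE _ hi) (extE _ (ltnW hi)); apply: Hs => /=.
  exact: leqnSn.
- move=> k hk; rewrite -psum_ext // /psum sumrB subr_ge0; exact: Huv.
Qed.

End Aux.

Section Ville.
Variable R : realType.

Definition delta (Z : finType) (z : Z) : Z -> R := fun z' => (z' == z)%:R.

Lemma sum_delta (Z : finType) (z : Z) (f : Z -> R) : \sum_z' delta z z' * f z' = f z.
Proof.
rewrite (bigD1 z) //= /delta eqxx mul1r big1 ?addr0 // => z' /negPf ->.
by rewrite mul0r.
Qed.

Lemma delta_prob (Z : finType) (z : Z) : is_prob (delta z).
Proof.
split; first by move=> z'; rewrite /delta ler0n.
by rewrite -[RHS](sum_delta z (fun _ => 1)); apply: eq_bigr => *; rewrite mulr1.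
Qed.

Lemma sum_ordS k (F : 'I_k.+1 -> R) :
  \sum_i F i = \sum_(j < k) F (lift ord_max j) + F ord_max.
Proof.
rewrite big_ord_recr /=; congr (_ + _); apply: eq_bigr => j _; congr F.
by apply: ord_inj; rewrite lift_max.
Qed.

Lemma ville k : forall (Z : finType) (a : 'I_k -> Z -> R), (exists z : Z, True) ->
  (exists l : Z -> R, is_prob l /\ forall i, 0 <= \sum_z l z * a i z) \/
  (exists t : 'I_k -> R, is_prob t /\ forall z, \sum_i t i * a i z < 0).
Proof.
elim: k => [|k IH] Z a [z0 _].
  by left; exists (delta z0); split; [exact: delta_prob| case].
pose al z := a ord_max z.
pose a' (i : 'I_k) z := a (lift ord_max i) z.
case: (boolP [exists z, 0 <= al z]) => [/existsP [z1 hz1] | hno]; last first.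
  right; exists (delta ord_max); split; first exact: delta_prob.
  move=> z; rewrite sum_delta ltNge.
  by move/existsPn: hno => /(_ z).
pose om (c : (Z + Z * Z)%type) : Z -> R :=
  match c with
  | inl z => if 0 <= al z then delta z else delta z1
  | inr zz => if (0 <= al zz.1) && (al zz.2 < 0) then
      (fun z => - al zz.2 * delta zz.1 z + al zz.1 * delta zz.2 z) else delta z1
  end.
have om0 c z : 0 <= om c z.
  have d0 (z' : Z) : 0 <= delta z' z by rewrite /delta ler0n.
  case: c => [z'|[p q]] /=; first by case: ifP.
  case: ifP => // /andP [h1 h2]; apply: addr_ge0; apply: mulr_ge0 => //.
  by rewrite oppr_ge0 ltW.
have sum_om c (f : Z -> R) : \sum_z om c z * f z =
   match c with
   | inl z => if 0 <= al z then f z else f z1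
   | inr zz => if (0 <= al zz.1) && (al zz.2 < 0) then
      - al zz.2 * f zz.1 + al zz.1 * f zz.2 else f z1
   end.
  case: c => [z'|[p q]] /=; first by case: ifP => _; rewrite sum_delta.
  case: ifP => _; last by rewrite sum_delta.
  rewrite -(sum_delta p (fun z => - al q * f z)) -(sum_delta q (fun z => al p * f z)).
  rewrite -big_split; apply: eq_bigr => z _ /=; ring.
have om_pos c : 0 < \sum_z om c z.
  have := sum_om c (fun _ => 1); under eq_bigr do rewrite mulr1; move=> ->.
  case: c => [z'|[p q]] /=; first by case: ifP.
  case: ifP => // /andP [h1 h2]; rewrite !mulr1; apply: ltr_wpDr => //.
  by rewrite oppr_gt0.
have om_al c : 0 <= \sum_z om c z * al z.
  rewrite sum_om; case: c => [z'|[p q]] /=; first by case: ifP.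
  case: ifP => // _.
  by have -> : - al q * al p + al p * al q = 0 by ring.
pose b (i : 'I_k) c := \sum_z om c z * a' i z.
have [[l [[l0 l1] hl]]|[t' [[t0 t1] ht]]] := IH _ b (ex_intro _ (inl z1) I).
  pose lz z := \sum_c l c * om c z.
  have lz0 z : 0 <= lz z by apply: sumr_ge0 => c _; apply: mulr_ge0.
  have lzE (g : Z -> R) : \sum_z lz z * g z = \sum_c l c * \sum_z om c z * g z.
    rewrite /lz; under eq_bigr do rewrite mulr_suml.
    rewrite exchange_big; apply: eq_bigr => c _; rewrite mulr_sumr.
    by apply: eq_bigr => z _; rewrite mulrA.
  pose T := \sum_z lz z.
  have T0 : 0 < T.
    rewrite lt0r sumr_ge0 ?andbT; last by move=> z _; exact: lz0.
    apply/negP => /eqP hT.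
    have hT' : \sum_c l c * \sum_z om c z = 0.
      rewrite -[RHS]hT /T; transitivity (\sum_z lz z * 1); last first.
        by apply: eq_bigr => z _; rewrite mulr1.
      rewrite lzE; apply: eq_bigr => c _; congr (_ * _).
      by apply: eq_bigr => z _; rewrite mulr1.
    have hc c : l c = 0.
      have /eqP := psumr_eq0P (P := predT) (fun c _ => mulr_ge0 (l0 c) (ltW (om_pos c))) hT' (i := c) isT.
      by rewrite mulf_eq0 (negbTE (lt0r_neq0 (om_pos c))) orbF => /eqP.
    move: l1; rewrite big1 => [/eqP|c' _]; last exact: hc.
    by rewrite eq_sym oner_eq0.
  left; exists (fun z => lz z / T); split; first split.
  - by move=> z; apply: divr_ge0 => //; apply: ltW.
  - by rewrite -mulr_suml divff // lt0r_neq0.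
  move=> i; under eq_bigr do rewrite mulrAC.
  rewrite -mulr_suml; apply: divr_ge0; last exact: ltW.
  rewrite lzE; case: (unliftP ord_max i) => [j ->|->].
    by have := hl j; rewrite /b.
  by apply: sumr_ge0 => c _; apply: mulr_ge0 => //; apply: om_al.
pose g z := \sum_i t' i * a' i z.
have key c : \sum_i t' i * b i c = \sum_z om c z * g z.
  rewrite /b /g; under eq_bigr do rewrite mulr_sumr.
  rewrite exchange_big; apply: eq_bigr => z _; rewrite mulr_sumr.
  by apply: eq_bigr => i _; ring.
have hg z : 0 <= al z -> g z < 0.
  by move=> hz; have := ht (inl z); rewrite key sum_om hz.
have hpair p q : 0 <= al p -> al q < 0 -> - al q * g p + al p * g q < 0.
  by move=> hp hq; have := ht (inr (p, q)); rewrite key sum_om /= hp hq.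
pose L := \big[Num.max/0]_(z | al z < 0) (g z / (- al z)).
pose H := \big[Num.min/(L + 1)]_(z | 0 < al z) (- g z / al z).
have L0 : 0 <= L by rewrite /L; elim/big_rec: _ => // i x _ hx; rewrite le_max hx orbT.
have Llo z : al z < 0 -> g z / (- al z) <= L.
  by move=> hz; rewrite /L (bigD1 z) //= le_max lexx.
have Hhi z : 0 < al z -> H <= - g z / al z.
  by move=> hz; rewrite /H (bigD1 z) //= ge_min lexx.
have LH : L < H.
  apply: (big_ind (fun v => L < v)); first by rewrite ltrDl.
    by move=> x y hx hy; rewrite lt_min hx.
  move=> p hp; apply: (big_ind (fun v => v < - g p / al p)).
  - by apply: divr_gt0 => //; rewrite oppr_gt0; apply: hg; apply: ltW.
  - by move=> x y hx hy; rewrite gt_max hx.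
  move=> q hq; rewrite ltr_pdivrMr ?oppr_gt0 // mulrC mulrA ltr_pdivlMr //.
  have := hpair p q (ltW hp) hq; lra.
pose tau := (L + H) / 2.
have Lt : L < tau by rewrite /tau; lra.
have tH : tau < H by rewrite /tau; lra.
have tau0 : 0 <= tau by lra.
pose t i := (if unlift ord_max i is Some j then t' j else tau) / (1 + tau).
right; exists t; split; first split.
- move=> i; apply: divr_ge0; last lra.
  by case: (unlift ord_max i).
- rewrite -mulr_suml sum_ordS unlift_none.
  under eq_bigr do rewrite liftK.
  by rewrite t1 divff //; lra.
move=> z; under eq_bigr do rewrite mulrAC.
rewrite -mulr_suml sum_ordS unlift_none.
under eq_bigr do rewrite liftK.
rewrite pmulr_llt0; last by rewrite invr_gt0; lra.
have -> : \sum_(j < k) t' j * a (lift ord_max j) z = g z by [].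
case: (ltrgtP (al z) 0) => hz.
- have := Llo z hz; rewrite -/(al z).
  move=> h; have : g z / - al z < tau by apply: le_lt_trans Lt.
  rewrite ltr_pdivrMr ?oppr_gt0 //; rewrite /al; lra.
- have : tau < - g z / al z by apply: lt_le_trans (Hhi z hz).
  rewrite ltr_pdivlMr //; rewrite /al; lra.
- have hz' : a ord_max z = 0 by [].
  by rewrite hz' mulr0 addr0; apply: hg; rewrite /al hz'.
Qed.

End Ville.

Section Rado.
Variable R : realType.

Lemma sort_perm n (t : 'I_n -> R) : exists pi : {perm 'I_n}, nonincreasing (fun i => t (pi i)).
Proof.
pose F (s : {perm 'I_n}) := \sum_i t (s i) * - (i : nat)%:R.
have [pi _ hpi] := @arg_maxP _ _ _ (1%g : {perm 'I_n}) xpredT F isT.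
exists pi => i j hij; rewrite leNgt; apply/negP => hlt.
have hij' : (i < j)%N.
  rewrite ltn_neqAle hij andbT; apply/negP => /eqP hij2.
  by move: hlt; rewrite (ord_inj hij2) ltxx.
have nij : i != j by rewrite neq_ltn hij'.
pose s := (tperm i j * pi)%g.
have := hpi s isT; rewrite /= leNgt => /negP; apply.
have e : F s - F pi = (t (pi j) - t (pi i)) * ((j : nat)%:R - (i : nat)%:R).
  rewrite /F -sumrB (bigD1 i) //= (bigD1 j) /=; last by rewrite eq_sym.
  rewrite big1 ?addr0; last first.
    move=> x /andP [hx1 hx2]; rewrite /s permM tpermD ?subrr //.
    by rewrite eq_sym.
    by rewrite eq_sym.
  by rewrite /s !permM tpermL tpermR; ring.
rewrite -subr_gt0 e; apply: mulr_gt0; first by rewrite subr_gt0.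
by rewrite subr_gt0 ltr_nat.
Qed.

Lemma psum_perm n (t : 'I_n -> R) (pi : {perm 'I_n}) k : (k <= n)%N ->
  nonincreasing (fun i => t (pi i)) -> (forall i, 0 <= t i) ->
  psum t k <= psum (fun i => t (pi i)) k.
Proof.
move=> hk hs ht.
have -> : psum t k = \sum_i (if (pi i < k)%N then 1 else 0) * t (pi i).
  rewrite /psum (reindex_inj (@perm_inj _ pi)) /= big_mkcond.
  by apply: eq_bigr => i _; case: ifP; rewrite ?mul1r ?mul0r.
apply: W => //.
  by move=> i; case: ifP; rewrite ?lexx ?ler01.
have -> : \sum_i (if (pi i < k)%N then 1 else 0 : R) = psum (fun _ : 'I_n => 1) k.
  rewrite /psum [RHS](reindex_inj (@perm_inj _ pi)) /= [RHS]big_mkcond.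
  by apply: eq_bigr => i _.
rewrite psum_ext // (eq_bigr (fun _ => 1)); last first.
  by move=> i _; rewrite (extE _ (leq_trans (ltn_ord i) hk)).
by rewrite sumr_const card_ord.
Qed.

Lemma rado n (p q : 'I_n -> R) : nonincreasing p -> nonincreasing q ->
  (forall i, 0 <= q i) -> (forall k, (k <= n)%N -> psum q k <= psum p k) ->
  \sum_i q i = \sum_i p i ->
  exists l : {perm 'I_n} -> R, is_prob l /\ forall y, q y = \sum_s l s * p (s y).
Proof.
move=> Hp Hq Hq0 Hqp Hsum.
have := @ville R n {perm 'I_n} (fun y s => p (s y) - q y) (ex_intro _ 1%g I).
case=> [[l [[l0 l1] hl]]|[t [[t0 t1] ht]]].
  exists l; split => //.
  pose d y := \sum_s l s * p (s y) - q y.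
  have d0 y : 0 <= d y.
    have := hl y; under eq_bigr do rewrite mulrBr.
    by rewrite sumrB -mulr_suml l1 mul1r.
  have dsum : \sum_y d y = 0.
    rewrite /d sumrB exchange_big /=.
    have hs (s : {perm 'I_n}) : \sum_y p (s y) = \sum_y p y by rewrite [RHS](reindex_inj (@perm_inj _ s)).
    under eq_bigr => s _ do rewrite -mulr_sumr hs -Hsum.
    by rewrite -mulr_suml l1 mul1r subrr.
  move=> y; apply/eqP; rewrite eq_sym -subr_eq0.
  by apply/eqP; apply: (psumr_eq0P (P := predT) (fun y _ => d0 y) dsum).
have [pi hpi] := sort_perm t.
have := ht (pi^-1)%g; rewrite ltNge => /negP; case.
under eq_bigr do rewrite mulrBr.
rewrite sumrB subr_ge0.
have -> : \sum_y t y * p ((pi^-1)%g y) = \sum_i t (pi i) * p i.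
  rewrite (reindex_inj (@perm_inj _ pi)) /=; apply: eq_bigr => i _.
  by rewrite permK.
apply: le_trans (_ : \sum_i t (pi i) * q i <= _); last first.
  apply: abel_ord => //.
have -> : \sum_y t y * q y = \sum_y q y * t y by apply: eq_bigr => *; rewrite mulrC.
have -> : \sum_i t (pi i) * q i = \sum_i q i * t (pi i) by apply: eq_bigr => *; rewrite mulrC.
apply: abel_ord => // k hk; exact: psum_perm.
Qed.

End Rado.

Section Gen.
Variable R : realType.

Lemma kfnorm_ext n (p p' : 'I_n -> R) k : p =1 p' -> kfnorm p k = kfnorm p' k.
Proof. by move=> h; rewrite /kfnorm (eq_map h). Qed.

Lemma psum0 n (p : 'I_n -> R) : psum p 0 = 0.
Proof. by rewrite /psum big_pred0. Qed.

Lemma maj_psum n (p q : 'I_n -> R) : nonincreasing p -> nonincreasing q ->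
  majorizes p q -> forall k, (k <= n)%N -> psum q k <= psum p k.
Proof.
move=> hp hq hm [|k] hk; first by rewrite !psum0.
by rewrite -!kfnormE //; apply: hm; rewrite hk.
Qed.

Lemma psum_maj n (p q : 'I_n -> R) : nonincreasing p -> nonincreasing q ->
  (forall k, (k <= n)%N -> psum q k <= psum p k) -> majorizes p q.
Proof.
move=> hp hq hm k /andP [_ hk]; rewrite !kfnormE //; exact: hm.
Qed.

Lemma psum_le_sum n (p : 'I_n -> R) k : (forall i, 0 <= p i) -> psum p k <= \sum_i p i.
Proof.
move=> h; rewrite /psum big_mkcond; apply: ler_sum => i _.
by case: ifP.
Qed.

Lemma psum_one n k : (k <= n)%N -> psum (fun _ : 'I_n => (1 : R)) k = k%:R.
Proof.
move=> hk; rewrite psum_ext // (eq_bigr (fun _ => 1)); last first.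
  by move=> i _; rewrite (extE _ (leq_trans (ltn_ord i) hk)).
by rewrite sumr_const card_ord.
Qed.

Lemma le_bigmax (I : finType) (f : I -> R) x : f x <= \big[Num.max/0]_i f i.
Proof. by rewrite (bigD1 x) //= le_max lexx. Qed.

Lemma bigmax_ge0 (I : finType) (f : I -> R) : 0 <= \big[Num.max/0]_i f i.
Proof. by elim/big_rec: _ => // i x _ hx; rewrite le_max hx orbT. Qed.

Lemma convex_le_max (I : finType) (a f : I -> R) : is_prob a ->
  \sum_i a i * f i <= \big[Num.max/0]_i f i.
Proof.
move=> [a0 a1]; apply: le_trans (_ : \sum_i a i * \big[Num.max/0]_i f i <= _).
  by apply: ler_sum => i _; apply: ler_wpM2l => //; apply: le_bigmax.
by rewrite -mulr_suml a1 mul1r.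
Qed.

Lemma bigmax_scale (I : finType) (f : I -> R) c : 0 <= c ->
  \big[Num.max/0]_i (c * f i) = c * \big[Num.max/0]_i f i.
Proof.
move=> hc; apply: (big_rec2 (fun a b => a = c * b)); first by rewrite mulr0.
by move=> i a b _ ->; rewrite maxr_pMr.
Qed.

Lemma prob_pos n (q : 'I_n -> R) k : is_prob q -> nonincreasing q -> (0 < k)%N ->
  0 < psum q k.
Proof.
move=> [q0 q1] hq hk.
case: n q q0 q1 hq => [|n] q q0 q1 hq; first by move: q1; rewrite big_ord0 => /eqP; rewrite eq_sym oner_eq0.
have hi0 : 0 < q ord0.
  rewrite ltNge; apply/negP => h.
  have : \sum_i q i <= \sum_(i < n.+1) q ord0 by apply: ler_sum => i _; apply: hq.
  rewrite q1 sumr_const card_ord => h2.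
  have := le_trans h2 (mulrn_wle0 _ h); rewrite ler10 //.
rewrite /psum (bigD1 ord0) //=; apply: lt_le_trans hi0 _.
by rewrite lerDl; apply: sumr_ge0 => i _.
Qed.

End Gen.

Section Main.
Variables (R : realType) (m m' n : nat).
Variables (N : 'I_m -> 'I_n -> R) (M : 'I_m' -> 'I_n -> R).
Hypotheses (cN : is_channel N) (cM : is_channel M).
Hypotheses (dN : forall x, nonincreasing (N x)) (dM : forall w, nonincreasing (M w)).

Definition mix (S : 'I_m' -> 'I_m -> R) w := fun y => \sum_(x < m) S w x * N x y.

Lemma N0 x y : 0 <= N x y. Proof. by case: (cN x). Qed.
Lemma M0 w y : 0 <= M w y. Proof. by case: (cM w). Qed.

Lemma mix_dec S w : is_channel S -> nonincreasing (mix S w).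
Proof. by move=> cS; apply: noninc_mix => // x; case: (cS w). Qed.

Lemma mix_sum S w : is_channel S -> \sum_y mix S w y = 1.
Proof.
move=> cS; rewrite /mix exchange_big /=.
under eq_bigr do rewrite -mulr_sumr (proj2 (cN _)) mulr1.
by case: (cS w).
Qed.

Definition P3 := exists S : 'I_m' -> 'I_m -> R, is_channel S /\
         (forall w, majorizes (fun y => \sum_(x < m) S w x * N x y) (M w)).

Lemma I13 : channel_majorizes N M -> P3.
Proof using cN cM dN dM.
move=> [Z [S [D [cS cD dsD hM]]]].
have S0 w xz : 0 <= S w xz by case: (cS w).
have D0 yz y : 0 <= D yz y by case: (cD yz).
exists (fun w x => \sum_z S w (x, z)); split.
  move=> w; split; first by move=> x; apply: sumr_ge0 => z _.
  by rewrite pair_big /=; rewrite -[RHS](proj2 (cS w)); apply: eq_bigr => [[]].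
move=> w; apply: psum_maj.
- by apply: noninc_mix => // x; apply: sumr_ge0 => z _.
- exact: dM.
move=> k hk.
have e1 : psum (M w) k = \sum_xz S w xz * psum (fun y' => \sum_y N xz.1 y * D (y, xz.2) y') k.
  transitivity (psum (fun y' => \sum_xz S w xz * (\sum_y N xz.1 y * D (y, xz.2) y')) k).
    by apply: eq_bigr => y' _; rewrite hM.
  by rewrite psum_mix.
have e2 xz : psum (fun y' => \sum_y N xz.1 y * D (y, xz.2) y') k <= psum (N xz.1) k.
  rewrite psum_mix; under eq_bigr do rewrite mulrC.
  apply: W.
  - exact: dN.
  - by move=> y; apply: N0.
  - move=> y; apply/andP; split; first by apply: sumr_ge0 => *.
    apply: le_trans (psum_le_sum _ _) _; first by move=> *.
    by rewrite (proj2 (cD (y, xz.2))).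
  rewrite /psum exchange_big /=.
  rewrite (eq_bigr (fun _ => 1)); last by move=> y' _; rewrite (proj2 (dsD xz.2)).
  by rewrite -/(psum (fun _ : 'I_n => (1 : R)) k) psum_one.
rewrite e1 psum_mix.
apply: le_trans (_ : \sum_xz S w xz * psum (N xz.1) k <= _).
  by apply: ler_sum => xz _; apply: ler_wpM2l.
rewrite [X in _ <= X](eq_bigr (fun x => \sum_z S w (x, z) * psum (N x) k)); last first.
  by move=> x _; rewrite mulr_suml.
by rewrite pair_bigA; apply: ler_sum => [[x z]] _ /=.
Qed.

Lemma I31 : P3 -> channel_majorizes N M.
Proof using cN cM dN dM.
move=> [S [cS hS]].
have S0 w x : 0 <= S w x by case: (cS w).
have : forall w, exists l : {perm 'I_n} -> R, is_prob l /\ forall y, M w y = \sum_s l s * mix S w (s y).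
  move=> w; apply: rado.
  - exact: mix_dec.
  - exact: dM.
  - exact: M0.
  - apply: maj_psum; [exact: mix_dec|exact: dM|exact: hS].
  - by rewrite mix_sum // (proj2 (cM w)).
case/fin_all_exists => l hl.
have perm_row (s : {perm 'I_n}) y : \sum_y' ((s y' == y)%:R : R) = 1.
  rewrite -[RHS](proj2 (delta_prob R ((s^-1)%g y))); apply: eq_bigr => y' _.
  rewrite /delta; congr (_%:R); congr (nat_of_bool _); apply/idP/idP => /eqP h; apply/eqP.
    by rewrite -h permK.
  by rewrite h permKV.
have perm_col (s : {perm 'I_n}) y' : \sum_y ((s y' == y)%:R : R) = 1.
  rewrite -[RHS](proj2 (delta_prob R (s y'))); apply: eq_bigr => y _.
  by rewrite /delta eq_sym.
have inner x (s : {perm 'I_n}) y' : \sum_y N x y * (s y' == y)%:R = N x (s y').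
  rewrite (bigD1 (s y')) //= eqxx mulr1 big1 ?addr0 // => y hy.
  by rewrite eq_sym (negbTE hy) mulr0.
exists {perm 'I_n}, (fun w xs => S w xs.1 * l w xs.2),
  (fun (ys : 'I_n * {perm 'I_n}) (y' : 'I_n) => ((ys.2 y' == ys.1)%:R : R)); split.
- move=> w; split; first by move=> [x s]; apply: mulr_ge0 => //; case: (hl w) => [[l0 _] _].
  transitivity (\sum_x \sum_(s : {perm 'I_n}) S w x * l w s); first by rewrite pair_bigA.
  under eq_bigr do rewrite -mulr_sumr (proj2 (proj1 (hl w))) mulr1.
  exact: (proj2 (cS w)).
- move=> [y s]; split; first by move=> y'; apply: ler0n.
  exact: perm_row.
- move=> s; split; first by move=> y; split; [move=> y'; apply: ler0n|exact: perm_row].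
  exact: perm_col.
move=> w y'; rewrite (proj2 (hl w) y') /mix.
under [RHS]eq_bigr => xs _ do rewrite inner.
transitivity (\sum_x \sum_(s : {perm 'I_n}) S w x * l w s * N x (s y')); last by rewrite pair_bigA.
rewrite exchange_big /=; apply: eq_bigr => s _; rewrite mulr_sumr; apply: eq_bigr => x _.
by rewrite mulrA [l w s * S w x]mulrC.
Qed.

Lemma I23 : set_majorizes (conv_hull N) (conv_hull M) -> P3.
Proof using cN cM dN dM.
move=> hsm.
have : forall w, exists a : 'I_m -> R, is_prob a /\
    majorizes (fun y => \sum_x a x * N x y) (M w).
  move=> w.
  have hc : conv_hull M (M w).
    by exists (delta R w); split; [exact: delta_prob | move=> y; rewrite sum_delta].
  have [p [[a [ha hp]] hm]] := hsm _ hc.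
  exists a; split => // k hk; have := hm k hk.
  by rewrite (kfnorm_ext k hp).
move/fin_all_exists => [S hS]; exists S; split => w; [exact: (proj1 (hS w))|exact: (proj2 (hS w))].
Qed.

Lemma I32 : P3 -> set_majorizes (conv_hull N) (conv_hull M).
Proof using cN cM dN dM.
move=> [S [cS hS]] q [b [[b0 b1] hq]].
have S0 w x : 0 <= S w x by case: (cS w).
pose a x := \sum_w b w * S w x.
have a0 x : 0 <= a x by apply: sumr_ge0 => w _; apply: mulr_ge0.
exists (fun y => \sum_x a x * N x y); split.
  exists a; split => //; split => //.
  rewrite /a exchange_big /=.
  under eq_bigr do rewrite -mulr_sumr (proj2 (cS _)) mulr1.
  exact: b1.
have d1 : nonincreasing (fun y => \sum_x a x * N x y) by apply: noninc_mix.
have d2 : nonincreasing (fun y => \sum_w b w * M w y) by apply: noninc_mix.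
move=> k hk; rewrite (kfnorm_ext k hq) !kfnormE //.
rewrite !psum_mix.
have -> : \sum_x a x * psum (N x) k = \sum_w b w * psum (mix S w) k.
  rewrite /a; under eq_bigr do rewrite mulr_suml.
  rewrite exchange_big /=; apply: eq_bigr => w _.
  rewrite /mix psum_mix mulr_sumr; apply: eq_bigr => x _.
  by rewrite mulrA.
apply: ler_sum => w _; apply: ler_wpM2l => //.
apply: maj_psum; [exact: mix_dec|exact: dM|exact: hS|by case/andP: hk].
Qed.

Lemma I34 : P3 -> forall s : 'I_n -> R, is_prob_dec s ->
  \big[Num.max/0]_(x < m) dotv s (N x) >= \big[Num.max/0]_(w < m') dotv s (M w).
Proof using cN cM dN dM.
move=> [S [cS hS]] s [[s0 s1] sd].
have S0 w x : 0 <= S w x by case: (cS w).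
elim/big_rec: _ => [|w v _ hv]; first exact: bigmax_ge0.
rewrite ge_max hv andbT.
apply: le_trans (_ : dotv s (mix S w) <= _).
  rewrite /dotv; apply: abel_ord => //; apply: maj_psum.
  - exact: mix_dec.
  - exact: dM.
  - exact: hS.
have -> : dotv s (mix S w) = \sum_x S w x * dotv s (N x).
  rewrite /dotv /mix; under eq_bigr do rewrite mulr_sumr.
  rewrite exchange_big /=; apply: eq_bigr => x _; rewrite mulr_sumr.
  by apply: eq_bigr => i _; rewrite mulrA [s i * _]mulrC mulrA.
exact: convex_le_max (cS w).
Qed.

Definition P4 := forall s : 'I_n -> R, is_prob_dec s ->
  \big[Num.max/0]_(x < m) dotv s (N x) >= \big[Num.max/0]_(w < m') dotv s (M w).

Definition P5 := forall (t : 'I_n -> R) (w : 'I_m'), is_prob t ->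
  \big[Num.max/0]_(x < m)
     (\sum_(k < n) t k * (kfnorm (N x) k.+1 / kfnorm (M w) k.+1)) >= 1.

Lemma I45 : P4 -> P5.
Proof using cN cM dN dM.
move=> h4 t w [t0 t1].
have Lw0 (j : 'I_n) : 0 < psum (M w) j.+1 by apply: prob_pos => //; exact: cM.
pose r (j : 'I_n) := t j / psum (M w) j.+1.
have r0 j : 0 <= r j by apply: divr_ge0 => //; apply: ltW.
pose s' (i : 'I_n) := \sum_(j : 'I_n | (i <= j)%N) r j.
have s'0 i : 0 <= s' i by apply: sumr_ge0.
have s'd : nonincreasing s'.
  move=> i i' hii'; rewrite /s' [X in X <= _]big_mkcond [X in _ <= X]big_mkcond.
  apply: ler_sum => j _; case: ifP => hj; first by rewrite (leq_trans hii' hj).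
  by case: ifP => // _; exact: r0.
have dotE (p : 'I_n -> R) : dotv s' p = \sum_j r j * psum p j.+1.
  rewrite /dotv /s'; under eq_bigr do rewrite mulr_suml big_mkcond /=.
  rewrite exchange_big /=; apply: eq_bigr => j _.
  rewrite /psum mulr_sumr [RHS]big_mkcond; apply: eq_bigr => i _.
  by rewrite ltnS; case: ifP.
have hM : dotv s' (M w) = 1.
  rewrite dotE -[RHS]t1; apply: eq_bigr => j _; rewrite /r divfK //.
  exact: lt0r_neq0.
have hN x : dotv s' (N x) = \sum_k t k * (kfnorm (N x) k.+1 / kfnorm (M w) k.+1).
  rewrite dotE; apply: eq_bigr => j _; rewrite !kfnormE // /r; ring.
pose sig := \sum_i s' i.
have sig0 : 0 < sig.
  rewrite lt0r (sumr_ge0 _ (fun i _ => s'0 i)) andbT; apply/eqP => hs.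
  have hz i : s' i = 0 := psumr_eq0P (P:=predT) (fun i _ => s'0 i) hs (i:=i) isT.
  move: hM; rewrite /dotv big1 => [/eqP|i _]; last by rewrite hz mul0r.
  by rewrite eq_sym oner_eq0.
pose s i := s' i / sig.
have hs : is_prob_dec s.
  split; first split.
  - by move=> i; apply: divr_ge0 => //; apply: ltW.
  - by rewrite /s -mulr_suml divff // lt0r_neq0.
  - move=> i j hij; rewrite /s; apply: ler_wpM2r; last exact: s'd.
    by rewrite invr_ge0 ltW.
have e (p : 'I_n -> R) : dotv s p = sig^-1 * dotv s' p.
  by rewrite /dotv mulr_sumr; apply: eq_bigr => i _; rewrite /s; ring.
have h := le_trans (le_bigmax (fun w => dotv s (M w)) w) (h4 s hs).
have e2 : \big[Num.max/0]_(x < m) dotv s (N x) =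
    sig^-1 * \big[Num.max/0]_(x < m) dotv s' (N x).
  rewrite -bigmax_scale; last by rewrite invr_ge0 ltW.
  by apply: eq_bigr => x _; exact: e.
rewrite /= e hM e2 in h.
rewrite ler_pM2l ?invr_gt0 // in h.
have -> : \big[Num.max/0]_(x < m) (\sum_k t k * (kfnorm (N x) k.+1 / kfnorm (M w) k.+1)) =
   \big[Num.max/0]_(x < m) dotv s' (N x) by apply: eq_bigr => x _; rewrite hN.
exact: h.
Qed.

Lemma I53 : P5 -> P3.
Proof using cN cM dN dM.
move=> h5.
have : forall w, exists a : 'I_m -> R, is_prob a /\
    majorizes (fun y => \sum_x a x * N x y) (M w).
  move=> w.
  have [y0 _] : exists y0 : 'I_n, True.
    move: (proj2 (cM w)); case: (pickP (fun _ : 'I_n => true)) => [y0 _ _ | h]; first by exists y0.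
    rewrite big_pred0 // => /eqP; by rewrite eq_sym oner_eq0.
  have L0 (i : 'I_n) : 0 < psum (M w) i.+1 := prob_pos (cM w) (dM w) (ltn0Sn i).
  have [x0 _] : exists x0 : 'I_m, True.
    case: (pickP (fun _ : 'I_m => true)) => [x0 _ | h]; first by exists x0.
    exfalso; have := h5 (delta R y0) w (delta_prob R y0).
    by rewrite big_pred0 // ler10.
  have := @ville R n 'I_m (fun i x => psum (N x) i.+1 / psum (M w) i.+1 - 1) (ex_intro _ x0 I).
  case=> [[a [[a0 a1] ha]]|[t [ht hlt]]].
    exists a; split => //; apply: psum_maj.
    - by apply: noninc_mix.
    - exact: dM.
    move=> [|k] hk; first by rewrite !psum0.
    have := ha (Ordinal hk) => /=.
    under eq_bigr do rewrite mulrBr mulr1.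
    rewrite sumrB a1 subr_ge0 => h.
    rewrite psum_mix.
    have e : \sum_x a x * (psum (N x) k.+1 / psum (M w) k.+1) =
        (\sum_x a x * psum (N x) k.+1) / psum (M w) k.+1.
      by rewrite mulr_suml; apply: eq_bigr => *; rewrite mulrA.
    rewrite e ler_pdivlMr ?mul1r in h; first exact: h.
    exact: (L0 (Ordinal hk)).
  exfalso.
  have hb : \big[Num.max/0]_(x < m)
      (\sum_(k < n) t k * (kfnorm (N x) k.+1 / kfnorm (M w) k.+1)) < 1.
    apply: (big_ind (fun v => v < 1)); [exact: ltr01 | by move=> u v hu hv; rewrite gt_max hu hv | ].
    move=> x _; have := hlt x; under eq_bigr do rewrite mulrBr mulr1.
    rewrite sumrB (proj2 ht) subr_lt0 => h.
    apply: le_lt_trans h; rewrite le_eqVlt; apply/orP; left; apply/eqP.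
    by apply: eq_bigr => k _; rewrite !kfnormE.
  by move: hb; rewrite ltNge (h5 t w ht).
move/fin_all_exists => [S hS]; exists S; split => w; [exact: (proj1 (hS w))|exact: (proj2 (hS w))].
Qed.

End Main.

Theorem theorem8 (R : realType) (m m' n : nat)
  (N : 'I_m -> 'I_n -> R) (M : 'I_m' -> 'I_n -> R) :
  is_channel N -> is_channel M ->
  (forall x, nonincreasing (N x)) -> (forall w, nonincreasing (M w)) ->
  [<-> channel_majorizes N M;
       set_majorizes (conv_hull N) (conv_hull M);
       exists S : 'I_m' -> 'I_m -> R, is_channel S /\
         (forall w, majorizes (fun y => \sum_(x < m) S w x * N x y) (M w));
       forall s : 'I_n -> R, is_prob_dec s ->
         \big[Num.max/0]_(x < m) dotv s (N x) >= \big[Num.max/0]_(w < m') dotv s (M w);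
       forall (t : 'I_n -> R) (w : 'I_m'), is_prob t ->
         \big[Num.max/0]_(x < m)
            (\sum_(k < n) t k * (kfnorm (N x) k.+1 / kfnorm (M w) k.+1)) >= 1].
Proof.
move=> cN cM dN dM.
tfae => h.
- exact: (I32 cN cM dN dM (I13 cN cM dN dM h)).
- exact: (I23 cN cM dN dM h).
- exact: (I34 cN cM dN dM h).
- exact: (I45 cN cM dN dM h).
- exact: (I31 cN cM dN dM (I53 cN cM dN dM h)).
Qed.
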